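(* Define $E_{0,n}(x)=1$ for all $n\ge0$, $E_{1,n}(x)=1+x$ for all $n\ge1$, and for $2\le k\le n$, $E_{k,n}(x)=\widetilde{E}^{\mathbf{s}}_{k-1}(x)$ with $\mathbf{s}=(n-k+2,\dots,n)$. Then for all $1\le k\le n$, \[E_{k,n}(x)=E_{k-1,n-1}(x)+x\sum_{j=0}^{k-1}\binom{n-1}{j}A_j(x)\,E_{k-1-j,n-1-j}(x).\]
   Context: For $\mathbf{s}=(s_1,\dots,s_m)\in\mathbb{Z}_{>0}^m$ let $\mathcal{I}^{\mathbf{s}}_m=\{\mathbf{e}\in\mathbb{Z}^m:0\le e_i<s_i\}$, with $e_0=e_{m+1}=0$, $s_0=s_{m+1}=1$; $i\in\{0,\dots,m\}$ is an ascent if $e_i/s_i<e_{i+1}/s_{i+1}$ and a collision if $e_i/s_i=e_{i+1}/s_{i+1}$; $\widetilde{E}^{\mathbf{s}}_m(x)=\sum_{\mathbf{e}\in\mathcal{I}^{\mathbf{s}}_m}(1+x)^{\mathrm{col}(\mathbf{e})}x^{\mathrm{asc}(\mathbf{e})}$. Eulerian polynomials: $A_0(x)=1$, $A_n(x)=\sum_{\sigma\in\mathfrak{S}_n}x^{\mathrm{des}(\sigma)}$ for $n\ge1$, $\mathrm{des}(\sigma)=|\{i\in[n-1]:\sigma_i>\sigma_{i+1}\}|$. *)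

(* Defs.v *)
From HB Require Import structures.
From mathcomp Require Import all_boot all_order perm all_algebra.
Set Implicit Arguments. Unset Strict Implicit. Unset Printing Implicit Defensive.
Import Order.TTheory GRing.Theory Num.Theory.
Local Open Scope ring_scope.

Fixpoint invseqs (s : seq nat) : seq (seq nat) :=
  match s with
  | [::] => [:: [::]]
  | si :: s' => flatten [seq [seq i :: e | e <- invseqs s'] | i <- iota 0 si]
  end.

Definition padE (e : seq nat) : seq nat := 0%N :: rcons e 0%N.
Definition padS (s : seq nat) : seq nat := 1%N :: rcons s 1%N.

Definition ratio (s e : seq nat) (i : nat) : rat :=
  (nth 0%N (padE e) i)%:R / (nth 1%N (padS s) i)%:R.

Definition asc (s e : seq nat) : nat :=
  count (fun i => ratio s e i < ratio s e i.+1) (iota 0 (size s).+1).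
Definition col (s e : seq nat) : nat :=
  count (fun i => ratio s e i == ratio s e i.+1) (iota 0 (size s).+1).

Definition Etilde (s : seq nat) : {poly int} :=
  \sum_(e <- invseqs s) ((1 + 'X) ^+ col s e * 'X ^+ asc s e).

Definition des (n : nat) (sigma : 'S_n) : nat :=
  let w := [seq val (sigma i) | i <- enum 'I_n] in
  count (fun i => nth 0%N w i.+1 < nth 0%N w i)%N (iota 0 n.-1).

Definition Eulerian (n : nat) : {poly int} :=
  if n == 0%N then 1 else \sum_(sigma : 'S_n) 'X ^+ des sigma.

Definition Ekn (k n : nat) : {poly int} :=
  if k == 0%N then 1
  else if k == 1%N then 1 + 'X
  else Etilde (iota (n - k + 2) k.-1).

(* Main.v *)
Require Import Defs.
From HB Require Import structures.
From mathcomp Require Import all_boot all_order perm all_algebra.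
From mathcomp Require Import ring lra zify.
Import GRing.Theory Num.Theory.

Lemma I1 b c L v : v <= L ->
  \sum_(u < v) 'C(u, b) * 'C(L.-1 - u, c) =
  \sum_(t < c.+1) 'C(v, b.+1 + t) * 'C(L - v, c - t).
Proof.
elim: v => [|v IH] hv.
  rewrite big_ord0 big1 // => t _; by rewrite bin0n addSn.
rewrite big_ord_recr /= IH ?(ltnW hv) //.
have -> : L - v = (L.-1 - v).+1 by lia.
have -> : L.-1 - v = L - v.+1 by lia.
set w := L - v.+1.
rewrite [in RHS](eq_bigr (fun t : 'I_c.+1 => 'C(v, b.+1 + t) * 'C(w, c - t) + 'C(v, b + t) * 'C(w, c - t))); last first.
  by move=> t _; rewrite addSn binS mulnDl.
rewrite big_split /= [X in _ = _ + X]big_ord_recl /= addn0 subn0.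
rewrite big_ord_recr /= subnn bin0 muln1.
rewrite (eq_bigr (fun t : 'I_c => 'C(v, b.+1 + t) * 'C(w, c - t) + 'C(v, b + bump 0 t) * 'C(w, c - bump 0 t))); last first.
  move=> t _; rewrite /bump /= add1n addnS -addSn.
  have -> : c - t = (c - t.+1).+1 by move: (ltn_ord t); lia.
  by rewrite binS mulnDr; congr (_ + _); congr (_ * _); congr 'C(_, _); lia.
rewrite big_split /=.
rewrite [in RHS]big_ord_recr /= subnn.
rewrite bin0 muln1; ring.
Qed.

Lemma I2 b c L v : v <= L ->
  \sum_(v <= u < L) 'C(u, b) * 'C(L.-1 - u, c) =
  \sum_(a < b.+1) 'C(v, a) * 'C(L - v, b + c.+1 - a).
Proof.
move=> hv; move: (erefl (L - v)); move: {2}(L - v) => d.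
elim: d v hv => [|d IH] v hv hd.
  have -> : v = L by lia.
  rewrite big_geq // subnn big1 // => a _.
  rewrite bin0n; have -> : (b + c.+1 - a == 0) = false by move: (ltn_ord a); lia.
  by rewrite muln0.
rewrite big_ltn; last by lia.
rewrite IH; [|lia|lia].
have -> : L - v = (L.-1 - v).+1 by lia.
have -> : L - v.+1 = L.-1 - v by lia.
set w := L.-1 - v.
rewrite [in RHS](eq_bigr (fun a : 'I_b.+1 => 'C(v, a) * 'C(w, (b + c - a).+1) + 'C(v, a) * 'C(w, b + c - a))); last first.
  move=> a _; have -> : b + c.+1 - a = (b + c - a).+1 by move: (ltn_ord a); lia.
  by rewrite binS mulnDr.
rewrite big_split /= [X in _ = X + _]big_ord_recl [X in _ = _ + X]big_ord_recr /= bin0 mul1n subn0.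
rewrite addnS addKn.
rewrite [in RHS](eq_bigr (fun a : 'I_b => 'C(v, bump 0 a) * 'C(w, b + c - a))); last first.
  move=> a _; rewrite /bump /= add1n; congr (_ * _); congr 'C(_, _).
  move: (ltn_ord a); lia.
rewrite [in LHS]big_ord_recl /= bin0 mul1n subn0.
rewrite [in LHS](eq_bigr (fun a : 'I_b => 'C(v, bump 0 a) * 'C(w, b + c - a) + 'C(v, a) * 'C(w, b + c - a))); last first.
  move=> a _; rewrite /bump /= add1n binS mulnDl; congr (_ + _); congr (_ * _); congr 'C(_, _).
rewrite big_split /=.
ring.
Qed.


Local Open Scope ring_scope.
Local Notation R := {poly int}.

Lemma ratio_cmp (a c sa sc : nat) : (0 < sa)%N -> (0 < sc)%N -> (a < sa)%N -> (c < sc)%N ->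
  [\/ a = 0%N, c = 0%N | sc = sa.+1] ->
  ((a%:R / sa%:R < c%:R / sc%:R :> rat) = (a < c)%N) *
  ((a%:R / sa%:R == c%:R / sc%:R :> rat) = ((a == 0%N) && (c == 0%N))).
Proof.
move=> ha hc hac hcc H.
have sa0 : (0:rat) < sa%:R by rewrite ltr0n.
have sc0 : (0:rat) < sc%:R by rewrite ltr0n.
split.
  rewrite ltr_pdivrMr // mulrAC ltr_pdivlMr // -!natrM ltr_nat.
  apply/idP/idP => h; case: H => H; case: (leqP c a) => ?; nia.
rewrite eqr_div ?lt0r_neq0 // -!natrM eqr_nat.
apply/idP/idP => [/eqP h|/andP[/eqP-> /eqP->]]; last by rewrite !mul0n.
have [-> ->] : a = 0%N /\ c = 0%N by case: H => H; case: (leqP c a) => ?; nia.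
by [].
Qed.

Definition w (a c : nat) : R :=
  (1 + 'X) ^+ ((a == 0%N) && (c == 0%N)) * 'X ^+ (a < c)%N.
Fixpoint pwa (a : nat) (l : seq nat) : R :=
  if l is c :: l' then w a c * pwa c l' else 1.

Lemma invseqs_mem s e : e \in invseqs s ->
  size e = size s /\ forall i, (i < size s)%N -> (nth 0%N e i < nth 0%N s i)%N.
Proof.
elim: s e => [|x s IH] e /=.
  by rewrite inE => /eqP ->.
case/flatten_mapP => i; rewrite mem_iota add0n => /andP[_ hi] /mapP[e' /IH[h1 h2] ->].
split; first by rewrite /= h1.
by case=> [|j] //= /h2.
Qed.

Lemma G1 a L : pwa a L =
  \prod_(i <- iota 0 (size L)) w (nth 0%N (a :: L) i) (nth 0%N (a :: L) i.+1).
Proof.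
elim: L a => [|c L IH] a /=; first by rewrite big_nil.
rewrite big_cons IH; congr (_ * _).
by rewrite -(addn0 1%N) iotaDl big_map.
Qed.

Lemma G2 (p q : pred nat) l :
  (1 + 'X) ^+ (count p l) * 'X ^+ (count q l) =
  \prod_(i <- l) ((1 + 'X) ^+ (p i) * 'X ^+ (q i)) :> R.
Proof.
elim: l => [|x l IH] /=; first by rewrite big_nil mulr1.
by rewrite big_cons -IH !exprD; ring.
Qed.

Lemma bnd_ok b m e i : size e = m ->
  (forall j, (j < m)%N -> (nth 0%N e j < b.+1 + j)%N) ->
  ((nth 0%N e i < nth 1%N (iota b.+1 m) i)%N /\ (0 < nth 1%N (iota b.+1 m) i)%N).
Proof.
move=> he hb; case: (ltnP i m) => hi.
  by rewrite nth_iota // hb.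
by rewrite !nth_default ?size_iota ?he.
Qed.

Lemma pos_ok b m e i : size e = m ->
  (forall j, (j < m)%N -> (nth 0%N e j < b.+1 + j)%N) ->
  let s := iota b.+1 m in
  ((Defs.ratio s e i < Defs.ratio s e i.+1) =
     (nth 0%N (padE e) i < nth 0%N (padE e) i.+1)%N) *
  ((Defs.ratio s e i == Defs.ratio s e i.+1) =
     ((nth 0%N (padE e) i == 0%N) && (nth 0%N (padE e) i.+1 == 0%N))).
Proof.
move=> he hb s; rewrite /Defs.ratio /padE /padS /= !nth_rcons_default.
have [c1 c2] := bnd_ok _ _ _ i he hb.
apply: ratio_cmp => //.
- case: i {c1 c2} => //= j; rewrite nth_rcons_default.
  by have [] := bnd_ok _ _ _ j he hb.
- case: i {c1 c2} => //= j; rewrite !nth_rcons_default.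
  by have [] := bnd_ok _ _ _ j he hb.
case: i c1 c2 => [|j] c1 c2; first by apply: Or31.
rewrite /= nth_rcons_default.
case: (ltnP j.+1 m) => hj.
  apply: Or33; rewrite /= /s nth_rcons_default !nth_iota ?addnS //.
  exact: ltnW.
by apply: Or32; rewrite /= nth_default // he.
Qed.

Definition K b m c := \sum_(e <- invseqs (iota b.+1 m)) pwa 0 (rcons e c).

Lemma Etilde_K b m : Etilde (iota b.+1 m) = K b m 0.
Proof.
rewrite /Etilde /K; apply: eq_big_seq => e /invseqs_mem [].
rewrite size_iota => he hb.
have hb' : forall j, (j < m)%N -> (nth 0%N e j < b.+1 + j)%N.
  by move=> j hj; have := hb j hj; rewrite nth_iota.
rewrite /Defs.col /Defs.asc size_iota G2 G1 size_rcons he.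
apply: eq_big_seq => i _; rewrite /w.
by rewrite !(pos_ok _ _ _ i he hb').
Qed.

Lemma sum_invseqs_cons (F : seq nat -> R) si s :
  \sum_(e <- invseqs (si :: s)) F e = \sum_(i <- iota 0 si) \sum_(e <- invseqs s) F (i :: e).
Proof. by rewrite /= big_allpairs_dep. Qed.

Lemma sum_invseqs_rcons (F : seq nat -> R) s t :
  \sum_(e <- invseqs (rcons s t)) F e = \sum_(e <- invseqs s) \sum_(i < t) F (rcons e i).
Proof.
elim: s F => [|x s IH] F.
  rewrite sum_invseqs_cons /= big_cons big_nil addr0 -(big_mkord xpredT (fun i => F [:: i])) /=.
  by rewrite /index_iota subn0; apply: eq_bigr => i _; rewrite big_cons big_nil addr0.
rewrite /= sum_invseqs_cons sum_invseqs_cons.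
by apply: eq_bigr => i _; rewrite IH.
Qed.

Lemma pwa_rcons a l c : pwa a (rcons l c) = pwa a l * w (last a l) c.
Proof.
elim: l a => [|y l IH] a /=; first by rewrite mul1r mulr1.
by rewrite IH mulrA.
Qed.

Lemma K0 b c : K b 0 c = w 0 c.
Proof. by rewrite /K /= big_cons big_nil addr0 /= mulr1. Qed.

Lemma KS b m c : K b m.+1 c = \sum_(i < b + m.+1) K b m i * w i c.
Proof.
rewrite /K -[m.+1]addn1 iotaD cats1 sum_invseqs_rcons exchange_big /= addSnnS.
rewrite addn1. apply: eq_bigr => i _; rewrite big_distrl /=.
by apply: eq_bigr => e _; rewrite pwa_rcons last_rcons.
Qed.

Definition Gx b m := if m is m'.+1 then K b m' 0 else 1.

Fixpoint P (N j v : nat) {struct j} : R :=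
  if j is j'.+1 then \sum_(u < N.-1) P N.-1 j' u * 'X ^+ (u < v)%N else 1.

Definition T N j := \sum_(u < N) P N j u.

Lemma K_pos b m c : (0 < c)%N ->
  K b m c = 'X * \sum_(j < m.+1) Gx b (m - j) * P (b + m) j c.-1.
Proof.
move=> c0; elim: m c c0 => [|m IH] c c0.
  rewrite K0 big_ord_recl big_ord0 /w /= c0 mulr1 addr0.
  by case: c c0 => //= c _; rewrite expr0 mul1r mulr1.
rewrite KS addnS big_ord_recl /= big_ord_recl /=.
have cn : (c == 0%N) = false by case: c c0.
rewrite {1}/w /= c0 cn expr0 mul1r mulr1 mulrDr mulrC; congr (_ + _).
under eq_bigr => u _ do rewrite IH // /w /= mulrAC.
under eq_bigr => u _ do rewrite mulr_sumr.
rewrite mulr_sumr; under [RHS]eq_bigr => j _ do rewrite mulr_sumr mulr_sumr.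
rewrite [RHS]exchange_big /=; apply: eq_bigr => u _; apply: eq_bigr => j _.
have -> : (bump 0 u < c)%N = (u < c.-1)%N by rewrite /bump; case: c c0 {cn}.
rewrite /bump /= ?add0n ?add1n subSS expr0 mul1r.
ring.
Qed.

Lemma K_zero b m : K b m.+1 0 =
  (1 + 'X) * Gx b m.+1 + 'X * \sum_(j < m.+1) Gx b (m - j) * T (b + m) j.
Proof.
rewrite KS addnS big_ord_recl /= /w /= expr1 expr0 !mulr1 mulrC; congr (_ + _).
under eq_bigr => u _ do rewrite K_pos // /bump /= mulr1.
rewrite /T -mulr_sumr; congr (_ * _).
under [RHS]eq_bigr => j _ do rewrite mulr_sumr.
rewrite exchange_big /=.
by apply: eq_bigr => u _; rewrite /bump /=.
Qed.

Lemma desE n (s : 'S_n.+1) :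
  des s = count (fun i => (s (inord i.+1) < s (inord i))%N) (iota 0 n).
Proof.
rewrite /des /=; apply: eq_in_count => i; rewrite mem_iota add0n => /andP[_ hi].
have e : forall k, (k < n.+1)%N -> nth 0%N [seq val (s i) | i <- enum 'I_n.+1] k = s (inord k).
  move=> k hk; rewrite (nth_map ord0) ?size_enum_ord //; congr (val (s _)).
  by apply: val_inj; rewrite /= nth_enum_ord // inordK.
by rewrite !e // ltnW.
Qed.

Lemma bump_ltn v x y : (bump v x < bump v y)%N = (x < y)%N.
Proof. rewrite /bump; case: (leqP v x); case: (leqP v y) => /= *; lia. Qed.

Lemma des_lift j (v : 'I_j.+2) (s : 'S_j.+1) :
  des (lift_perm ord_max v s) = (des s + (v <= s ord_max))%N.
Proof.
have hl : forall i, (i <= j)%N -> (inord i : 'I_j.+2) = lift ord_max (inord i : 'I_j.+1).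
  move=> i hi; apply: val_inj; rewrite /= /bump /= !inordK //; case: leqP => /= *; lia.
rewrite !desE -[in iota 0 j.+1]addn1 iotaD cats1 -cats1 count_cat /= addn0; congr (_ + _)%N.
  apply: eq_in_count => i; rewrite mem_iota add0n => /andP[_ hi].
  by rewrite !hl ?(ltnW hi) // !lift_perm_lift /= bump_ltn.
have -> : (inord j.+1 : 'I_j.+2) = ord_max by apply: val_inj; rewrite /= inordK.
rewrite lift_perm_id hl // lift_perm_lift.
have -> : (inord j : 'I_j.+1) = ord_max by apply: val_inj; rewrite /= inordK.
by rewrite /= /bump; case: (leqP v (s ord_max)) => /= *; lia.
Qed.

Lemma perm_decomp n (G : 'S_n.+1 -> R) :
  \sum_(sg : 'S_n.+1) G sg = \sum_(v : 'I_n.+1) \sum_(s : 'S_n) G (lift_perm ord_max v s).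
Proof.
rewrite (partition_big (fun sg : 'S_n.+1 => sg ord_max) xpredT) //=.
apply: eq_bigr => j0 _.
set i0 := (ord_max : 'I_n.+1).
rewrite (reindex (lift_perm i0 j0)); last first.
  pose ulsf i (s : 'S_n.+1) k := odflt k (unlift (s i) (s (lift i k))).
  have ulsfK i (s : 'S_n.+1) k: lift (s i) (ulsf i s k) = s (lift i k).
    rewrite /ulsf; have:= neq_lift i k.
    by rewrite -(can_eq (permK s)) => /unlift_some[] ? ? ->.
  have inj_ulsf: injective (ulsf i0 _).
    move=> s; apply: can_inj (ulsf (s i0) s^-1%g) _ => k'.
    by rewrite {1}/ulsf ulsfK !permK liftK.
  exists (fun s => perm (inj_ulsf s)) => [s _ | s].
    by apply/permP=> k'; rewrite permE /ulsf lift_perm_lift lift_perm_id liftK.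
  move/(s _ =P _) => si0; apply/permP=> k.
  case: (unliftP i0 k) => [k'|] ->; rewrite ?lift_perm_id //.
  by rewrite lift_perm_lift -si0 permE ulsfK.
by apply: eq_bigl => s; rewrite lift_perm_id eqxx.
Qed.

Lemma sum_ind n t (F : nat -> R) : (t < n)%N ->
  \sum_(b < n) (t == b)%:R * F b = F t.
Proof.
move=> ht; rewrite (bigD1 (Ordinal ht)) //= eqxx mul1r big1 ?addr0 //.
move=> b hb; have -> : (t == b) = false.
  by apply/negP => /eqP e; move: hb; rewrite -val_eqE /= e eqxx.
by rewrite mul0r.
Qed.

Lemma sum_ind1 n t : (t < n)%N -> \sum_(b < n) (t == b)%:R = 1 :> R.
Proof.
move=> ht; transitivity (\sum_(b < n) (t == b)%:R * (fun=> (1:R)) b).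
  by apply: eq_bigr => b _; rewrite mulr1.
exact: sum_ind.
Qed.

Definition Dn (j a : nat) : R :=
  \sum_(s : 'S_j.+1) ((j - s ord_max)%N == a)%:R * 'X ^+ des s.

Lemma A1 j : Eulerian j.+1 = \sum_(a < j.+1) Dn j a.
Proof.
rewrite /Eulerian /Dn /= exchange_big /=; apply: eq_bigr => s _.
rewrite -mulr_suml sum_ind1 ?mul1r //.
by rewrite ltnS leq_subr.
Qed.

Lemma A2 a : Dn 0 a = (0%N == a)%:R.
Proof.
rewrite /Dn (eq_bigr (fun _ => (0%N == a)%:R)); last first.
  by move=> s _; rewrite sub0n /des /= mulr1.
by rewrite sumr_const card_Sn /=.
Qed.

Lemma A3 j a : (a <= j.+1)%N ->
  Dn j.+1 a = \sum_(b < j.+1) Dn j b * 'X ^+ (b < a)%N.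
Proof.
move=> ha.
have -> : \sum_(b < j.+1) Dn j b * 'X ^+ (b < a)%N =
   \sum_(s : 'S_j.+1) 'X ^+ des s * 'X ^+ (j - s ord_max < a)%N.
  rewrite /Dn; under eq_bigr => b _ do rewrite big_distrl.
  rewrite exchange_big /=; apply: eq_bigr => s _.
  transitivity (\sum_(i < j.+1) ((j - s ord_max)%N == nat_of_ord i)%:R *
      (fun k : nat => 'X ^+ des s * 'X ^+ (k < a)%N : R) (nat_of_ord i)).
    by apply: eq_bigr => i _; rewrite mulrA.
  by apply: (@sum_ind j.+1 (j - s ord_max) (fun k : nat => 'X ^+ des s * 'X ^+ (k < a)%N)); rewrite ltnS leq_subr.
rewrite /Dn perm_decomp.
transitivity (\sum_(v < j.+2) ((j.+1 - a)%N == nat_of_ord v)%:R *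
   (fun t : nat => \sum_(s : 'S_j.+1) 'X ^+ (des s + ((inord t : 'I_j.+2) <= s ord_max))%N : R) (nat_of_ord v)).
  apply: eq_bigr => v _; rewrite inord_val mulr_sumr; apply: eq_bigr => s _.
  rewrite lift_perm_id des_lift; congr (_%:R * _).
  have hv' := ltn_ord v; congr (nat_of_bool _); apply/idP/idP => /eqP h; apply/eqP; lia.
etransitivity.
  apply: (@sum_ind j.+2 (j.+1 - a) (fun t : nat => \sum_(s : 'S_j.+1) 'X ^+ (des s + ((inord t : 'I_j.+2) <= s ord_max))%N : R)).
  by rewrite ltnS leq_subr.
apply: eq_bigr => s _; rewrite exprD; congr (_ * 'X ^+ _).
rewrite inordK ?ltnS ?leq_subr //.
have h := ltn_ord (s ord_max); case: leqP => h1; case: ltnP => h2 //; lia.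
Qed.

Lemma BIsplit N j b v (f g : nat -> nat) : (b <= j)%N -> (v < N)%N ->
  \sum_(u < N.-1) (f u)%:R * 'X ^+ (u < v)%N =
    'X * (\sum_(u < v) f u)%:R + (\sum_(v <= u < N.-1) f u)%:R :> R.
Proof.
move=> hb hv.
rewrite -(big_mkord xpredT (fun u => (f u)%:R * 'X ^+ (u < v)%N)).
rewrite (@big_cat_nat _ _ _ v) /=; [|by []|lia].
congr (_ + _).
  rewrite natr_sum mulr_sumr big_mkord; apply: eq_bigr => u _.
  by rewrite ltn_ord mulrC.
rewrite natr_sum; apply: eq_big_nat => u /andP[hu _].
by rewrite ltnNge hu mulr1.
Qed.

Lemma BIsplit2 j b (g : nat -> nat) : (b <= j)%N ->
  \sum_(a < j.+2) (g a)%:R * 'X ^+ (b < a)%N =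
  (\sum_(a < b.+1) g a)%:R + 'X * (\sum_(t < (j - b).+1) g (b.+1 + t)%N)%:R :> R.
Proof.
move=> hb.
rewrite -(big_mkord xpredT (fun a => (g a)%:R * 'X ^+ (b < a)%N)).
rewrite (@big_cat_nat _ _ _ b.+1) /=; [|by []|lia].
congr (_ + _).
  rewrite natr_sum big_mkord; apply: eq_bigr => a _.
  by rewrite ltnNge -ltnS ltn_ord mulr1.
rewrite -{1}(add0n b.+1) big_addn.
have -> : (j.+2 - b.+1 = (j - b).+1)%N by lia.
rewrite big_mkord natr_sum mulr_sumr; apply: eq_bigr => t _.
have -> : (b < t + b.+1)%N by lia. by rewrite expr1 mulrC addnC.
Qed.

Lemma BI N j b v : (b < j.+1)%N -> (v < N)%N ->
  \sum_(u < N.-1) ('C(u, b) * 'C(N.-1.-1 - u, j - b))%:R * 'X ^+ (u < v)%N =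
  \sum_(a < j.+2) ('C(v, a) * 'C(N.-1 - v, j.+1 - a))%:R * 'X ^+ (b < a)%N :> R.
Proof.
move=> hb hv.
rewrite (@BIsplit N j b v (fun u => 'C(u, b) * 'C(N.-1.-1 - u, j - b))%N) //.
rewrite (@BIsplit2 j b (fun a => 'C(v, a) * 'C(N.-1 - v, j.+1 - a))%N) //.
rewrite I1; last by lia.
rewrite I2; last by lia.
rewrite addrC; congr (_ + _).
  congr (_%:R); apply: eq_bigr => a _; congr (_ * 'C(_, _)); lia.
congr (_ * _%:R); apply: eq_bigr => t _; congr (_ * 'C(_, _)); lia.
Qed.

Lemma P_closed j : forall N v, (v < N)%N ->
  P N j v = \sum_(a < j.+1) ('C(v, a) * 'C(N.-1 - v, j - a))%:R * Dn j a.
Proof.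
elim: j => [|j IH] N v hv.
  by rewrite /= big_ord1 A2 !bin0 /= mulr1.
rewrite /=.
under eq_bigr => u _ do rewrite IH ?ltn_ord // big_distrl.
under [RHS]eq_bigr => a _ do rewrite (A3 j a (ltn_ord a)) mulr_sumr.
rewrite exchange_big [RHS]exchange_big /=; apply: eq_bigr => b _.
transitivity (Dn j b * \sum_(u < N.-1) ('C(u, b) * 'C(N.-1.-1 - u, j - b))%:R * 'X ^+ (u < v)%N).
  by rewrite mulr_sumr; apply: eq_bigr => u _; ring.
transitivity (Dn j b * \sum_(a < j.+2) ('C(v, a) * 'C(N.-1 - v, j.+1 - a))%:R * 'X ^+ (b < a)%N).
  by rewrite BI.
by rewrite mulr_sumr; apply: eq_bigr => a _; ring.
Qed.

Lemma T_formula N j : (j < N)%N -> T N j = ('C(N, j.+1))%:R * Eulerian j.+1.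
Proof.
move=> hj; rewrite /T.
under eq_bigr => v _ do rewrite P_closed //.
rewrite exchange_big /= A1 mulr_sumr; apply: eq_bigr => a _.
rewrite -mulr_suml -natr_sum; congr (_%:R * _).
rewrite (I1 a (j - a) N N (leqnn N)) big_ord_recr /= !subnn bin0 muln1 big1 ?add0n.
  by congr 'C(_, _); have := ltn_ord a; lia.
move=> t _; rewrite bin0n.
have -> : (j - a - t == 0)%N = false by have := ltn_ord t; lia.
by rewrite muln0.
Qed.
Lemma Ekn_Gx k n : (k <= n)%N -> Ekn k n = Gx (n - k).+1 k.
Proof.
move=> kn; rewrite /Ekn; case: k kn => [|[|m]] kn //=.
  by rewrite K0 /w /= expr1 expr0 mulr1.
rewrite -Etilde_K // /=; congr (Etilde (_ :: iota _ _)); lia.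
Qed.

Theorem lemmaB1 (k n : nat) :
  (1 <= k)%N -> (k <= n)%N ->
  Ekn k n = Ekn k.-1 n.-1 +
    'X * \sum_(j < k) ('C(n.-1, j)%:R * Eulerian j * Ekn (k.-1 - j) (n.-1 - j)).
Proof.
case: k => [|[|m]] // _ kn.
  by rewrite /Ekn /= big_ord1 /Eulerian /= bin0 !mulr1.
set b := (n - m.+2).+1.
have Hn : n.-1 = (b + m)%N by rewrite /b; lia.
rewrite Ekn_Gx // -/b /= K_zero Ekn_Gx; last by lia.
have -> : (n.-1 - m.+1).+1 = b by rewrite /b; lia.
rewrite [in RHS]big_ord_recl /= subn0 Ekn_Gx; last by lia.
have -> : (n.-1 - 0 - m.+1).+1 = b by rewrite /b; lia.
have E0 : Eulerian 0 = 1 by [].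
rewrite bin0 E0 /= !mul1r mulrDl mul1r -addrA; congr (_ + _).
rewrite mulrDr; congr (_ + _); congr (_ * _).
apply: eq_bigr => j _; rewrite /bump /= add1n subSS Ekn_Gx; last by lia.
have -> : (n.-1 - j.+1 - (m - j)).+1 = b by rewrite /b; move: (ltn_ord j); lia.
rewrite T_formula; last by rewrite /b; move: (ltn_ord j); lia.
by rewrite Hn /Eulerian /= mulrC.
Qed.
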